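(* Let $\mathcal V=\{1,\dots,V\}$ be a vocabulary, $L\ge 1$, and let $P$ be a probability distribution on $\mathcal V^L$. Let $Q_\theta$ be an autoregressive model on $\mathcal V^L$ given by a logit map $F_\theta$, i.e. $Q_\theta(x_l\mid \mathbf x_{<l})=\mathrm{softmax}(F_\theta(\mathbf x_{<l}))_{x_l}$, and for a temperature $t>0$ let $Q^t_\theta(\mathbf x)=\prod_{l=1}^L \mathrm{softmax}(F_\theta(\mathbf x_{<l})/t)_{x_l}$. Let $$Z=\max_{\mathbf x\in\mathcal V^L}\ \max_{l\in\{1,\dots,L\}}\ \max_{i,j\in\mathcal V}\big(F_\theta(\mathbf x_{<l})_i-F_\theta(\mathbf x_{<l})_j\big).$$ Then for every temperature $t>0$ and every $\lambda\in(0,\infty)$, $$\alpha_\lambda(P\Vert Q^t_\theta)\le \frac{|\mathrm{Supp}(P)|}{V^L}e^{ZL/t}\quad\text{and}\quad \beta_\lambda(P\Vert Q^t_\theta)\le \frac1\lambda\,\frac{|\mathrm{Supp}(P)|}{V^L}e^{ZL/t}.$$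
   Context: For distributions $P,Q$ on a finite set $\mathcal X$ and $\lambda\in(0,\infty)$, the PR-curve quantities are $\alpha_\lambda(P\Vert Q)=\sum_{\mathbf x\in\mathcal X}\min(\lambda P(\mathbf x),Q(\mathbf x))$ (Precision at trade-off $\lambda$) and $\beta_\lambda(P\Vert Q)=\sum_{\mathbf x\in\mathcal X}\min(P(\mathbf x),Q(\mathbf x)/\lambda)$ (Recall at trade-off $\lambda$). $\mathrm{Supp}(P)$ is the set of sequences with positive $P$-probability, $\mathbf x_{<l}=(x_1,\dots,x_{l-1})$ (empty for $l=1$), and $F_\theta(\mathbf x_{<l})\in\mathbb R^V$ is the logit vector with entries $F_\theta(\mathbf x_{<l})_i$. *)

(* Defs.v *)
From HB Require Import structures.
From mathcomp Require Import all_boot all_order all_algebra.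
From mathcomp Require Import all_classical all_reals all_analysis.
Set Implicit Arguments. Unset Strict Implicit. Unset Printing Implicit Defensive.
Import Order.TTheory GRing.Theory Num.Theory.
Local Open Scope ring_scope.

(* Vocabulary {1..V} is modelled as 'I_V; sequences in V^L as L.-tuple 'I_V.
   Positions l = 1..L are 0-indexed as l : 'I_L; the prefix x_{<l} is
   take l x (empty for the first position). *)

Definition softmax (R : realType) (V : nat) (v : 'I_V -> R) (i : 'I_V) : R :=
  expR (v i) / \sum_(j < V) expR (v j).

Definition Qtemp (R : realType) (V L : nat) (F : seq 'I_V -> 'I_V -> R) (t : R)
  (x : L.-tuple 'I_V) : R :=
  \prod_(l < L) softmax (fun i => F (take l x) i / t) (tnth x l).

Definition PR_alpha (R : realType) (T : finType) (lam : R) (P Q : T -> R) : R :=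
  \sum_(x : T) Num.min (lam * P x) (Q x).
Definition PR_beta (R : realType) (T : finType) (lam : R) (P Q : T -> R) : R :=
  \sum_(x : T) Num.min (P x) (Q x / lam).

Definition supp (R : realType) (T : finType) (P : T -> R) : {set T} :=
  [set x | 0 < P x].

(* Z = max_x max_l max_{i,j} (F(x_{<l})_i - F(x_{<l})_j).  The big max is
   started at 0, which is harmless: the terms with i = j equal 0, so the
   maximum is always >= 0 (for L, V >= 1). *)
Definition Zmax (R : realType) (V L : nat) (F : seq 'I_V -> 'I_V -> R) : R :=
  \big[Num.max/0]_(x : L.-tuple 'I_V) \big[Num.max/0]_(l < L)
    \big[Num.max/0]_(i < V) \big[Num.max/0]_(j < V)
      (F (take l x) i - F (take l x) j).

(* Main.v *)
Require Import Defs.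
From HB Require Import structures.
From mathcomp Require Import all_boot all_order all_algebra.
From mathcomp Require Import all_classical all_reals all_analysis.
From mathcomp Require Import lra.
Import Order.TTheory GRing.Theory Num.Theory.
Local Open Scope ring_scope.

Lemma le_bigmax0 (R : realType) (I : finType) (G : I -> R) (i : I) :
  G i <= \big[Num.max/0]_(j : I) G j.
Proof. by rewrite (bigD1 i) //= le_max lexx. Qed.

Lemma softmax_le (R : realType) (V : nat) (hV : (0 < V)%N) (v : 'I_V -> R)
  (t Z : R) (i : 'I_V) : 0 < t -> (forall j, v i - v j <= Z) ->
  softmax (fun k => v k / t) i <= expR (Z / t) / V%:R.
Proof.
move=> ht hZ.
have S0 : 0 < \sum_(j < V) expR (v j / t).
  rewrite (bigD1 (Ordinal hV)) //=.
  have e := expR_gt0 (v (Ordinal hV) / t).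
  have s : 0 <= \sum_(i0 < V | i0 != Ordinal hV) expR (v i0 / t).
    by apply: sumr_ge0 => j _; apply: expR_ge0.
  lra.
have V0 : (0 < V%:R :> R) by rewrite ltr0n.
rewrite /softmax ler_pdivrMr // mulrAC ler_pdivlMr //.
have -> : expR (v i / t) * V%:R = \sum_(j < V) expR (v i / t).
  by rewrite sumr_const card_ord mulr_natr.
rewrite mulr_sumr.
apply: ler_sum => j _; rewrite -expRD ler_expR.
rewrite -mulrDl; apply: ler_wpM2r; first by rewrite invr_ge0 ltW.
by have := hZ j; lra.
Qed.

Lemma Q_le (R : realType) (V L : nat) (hV : (0 < V)%N)
  (F : seq 'I_V -> 'I_V -> R) (t : R) (ht : 0 < t) (x : L.-tuple 'I_V) :
  Qtemp F t x <= expR (Zmax L F * L%:R / t) / (V ^ L)%:R.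
Proof.
rewrite /Qtemp.
apply: (@le_trans _ _ (\prod_(l < L) (expR (Zmax L F / t) / V%:R))).
  apply: ler_prod => l _; apply/andP; split.
    rewrite /softmax divr_ge0 ?expR_ge0 //.
    by apply: sumr_ge0 => j _; apply: expR_ge0.
  apply: softmax_le => // j.
  rewrite /Zmax (bigD1 x) //= le_max; apply/orP; left.
  rewrite (bigD1 l) //= le_max; apply/orP; left.
  rewrite (bigD1 (tnth x l)) //= le_max; apply/orP; left.
  by rewrite (bigD1 j) //= le_max lexx.
rewrite prodr_const card_ord expr_div_n natrX -expRM_natr.
by rewrite mulrAC.
Qed.

Theorem theorem4p2 (R : realType) (V L : nat) (hV : (0 < V)%N) (hL : (0 < L)%N)
  (P : L.-tuple 'I_V -> R)
  (P_ge0 : forall x, 0 <= P x) (P_sum1 : \sum_(x : L.-tuple 'I_V) P x = 1)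
  (F : seq 'I_V -> 'I_V -> R) (t lam : R) (ht : 0 < t) (hlam : 0 < lam) :
  PR_alpha lam P (Qtemp F t)
    <= #|supp P|%:R / (V ^ L)%:R * expR (Zmax L F * L%:R / t)
  /\ PR_beta lam P (Qtemp F t)
    <= lam^-1 * (#|supp P|%:R / (V ^ L)%:R) * expR (Zmax L F * L%:R / t).
Proof.
set B := expR (Zmax L F * L%:R / t) / (V ^ L)%:R.
have HS : forall c : R, \sum_(x : L.-tuple 'I_V) (if x \in supp P then c else 0)
    = #|supp P|%:R * c.
  by move=> c; rewrite -big_mkcond sumr_const mulr_natl.
have P0 : forall x, x \notin supp P -> P x = 0.
  move=> x; rewrite /supp inE => /negP hx; apply/eqP; rewrite eq_le P_ge0 andbT.
  by rewrite leNgt; apply/negP.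
split.
  apply: (@le_trans _ _ (\sum_(x : L.-tuple 'I_V) (if x \in supp P then B else 0))).
    apply: ler_sum => x _; case: ifP => hx.
      by rewrite ge_min; apply/orP; right; apply: Q_le.
    by rewrite P0 ?hx // mulr0 ge_min lexx.
  by rewrite HS /B mulrA mulrAC.
apply: (@le_trans _ _ (\sum_(x : L.-tuple 'I_V) (if x \in supp P then lam^-1 * B else 0))).
  apply: ler_sum => x _; case: ifP => hx.
    rewrite ge_min; apply/orP; right; rewrite [_ / lam]mulrC; apply: ler_wpM2l; first by rewrite invr_ge0 ltW.
    exact: Q_le.
  by rewrite P0 ?hx // ge_min lexx.
rewrite HS /B.
set n := #|supp P|%:R; set E := expR _; set W := (V ^ L)%:R.
by rewrite mulrCA -!mulrA [E * _]mulrC.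
Qed.
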